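(* Let $X_1,\dots,X_n\subseteq\mathbb R^m$ ($2\le n\le m$) be smooth tropical hypersurfaces whose intersection is transversal. For nonempty $J\subseteq[n]=\{1,\dots,n\}$ let $U_J=\bigcup_{i\in J}X_i$, let $I=\bigcap_{i=1}^nX_i$ and $U=U_{[n]}$, and write $Z^{(0)}$ for the set of vertices ($0$-cells) of a polyhedral complex $Z$. Then, as disjoint unions (multisets), $$I^{(0)}\;\sqcup\bigsqcup_{|J|=n-1}U_J^{(0)}\;\sqcup\bigsqcup_{|J|=n-3}U_J^{(0)}\;\sqcup\cdots\;=\;U^{(0)}\;\sqcup\bigsqcup_{|J|=n-2}U_J^{(0)}\;\sqcup\bigsqcup_{|J|=n-4}U_J^{(0)}\;\sqcup\cdots,$$ where the unions range over subsets $J\subseteq[n]$ with $|J|\ge1$ of the indicated sizes. That is, for every point $p\in\mathbb R^m$, $$[p\in I^{(0)}]+\#\{J: 1\le|J|\le n-1,\ |J|\equiv n-1 \ (\mathrm{mod}\ 2),\ p\in U_J^{(0)}\}=[p\in U^{(0)}]+\#\{J:1\le|J|\le n-2,\ |J|\equiv n\ (\mathrm{mod}\ 2),\ p\in U_J^{(0)}\}.$$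
   Context: Over $(\mathbb R,\max,+)$, a tropical polynomial is $f(x)=\max_{a\in\mathcal A}\{\lambda_a+a\cdot x\}$, $\mathcal A\subseteq\mathbb Z^{m}$ finite, $\lambda_a\in\mathbb R$; Newton polytope $\Delta_f=\operatorname{conv}(\mathcal A)$; lifted polytope $\tilde\Delta_f=\operatorname{conv}\{(a,t):a\in\mathcal A,t\le\lambda_a\}$, whose bounded faces project to a regular lattice subdivision $\operatorname{Subdiv}(f)$ of $\Delta_f$. $V_{tr}(f)$ is the non-linear locus of $f$, a polyhedral complex of pure dimension $m-1$, with a bijection $C\mapsto C^\vee$ from $k$-cells of $V_{tr}(f)$ to $(m-k)$-cells of $\operatorname{Subdiv}(f)$, $C^\vee=\operatorname{conv}\{a:\lambda_a+a\cdot x=f(x)\}$ for $x$ in the relative interior of $C$. $V_{tr}(f)$ is smooth if every maximal cell of $\operatorname{Subdiv}(f)$ is a lattice simplex of volume $1/m!$. For $X_i=V_{tr}(f_i)$, the union $U_J=\bigcup_{i\in J}X_i$ is the tropical hypersurface $V_{tr}(\bigodot_{i\in J}f_i)$ (the product polynomial has function $\sum_{i\in J}f_i$), with its polyhedral complex structure and subdivision $\operatorname{Subdiv}_{U_J}=\operatorname{Subdiv}(\bigodot_{i\in J}f_i)$; each cell of it has a privileged representation as a Minkowski sum $\sum_{i\in J}\Lambda_i$, $\Lambda_i\in\operatorname{Subdiv}(f_i)$, obtained by uniquely decomposing the corresponding bounded face of $\tilde\Delta_{\bigodot f_i}=\sum\tilde\Delta_{f_i}$. Each cell $C$ of $I_J=\bigcap_{i\in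 J}X_i$ is uniquely $\bigcap_{i\in J}C_i$ with $C_i$ a cell of $X_i$ containing $C$ in its relative interior, and its dual $C^\vee\in\operatorname{Subdiv}_{U_J}$ has privileged representation $\sum_{i\in J}C_i^\vee$. The intersection $X_1\cap\dots\cap X_n$ is transversal if for every $J\subseteq[n]$ with $|J|\ge2$, $I_J$ has dimension $m-|J|$ and every cell $C$ of $I_J$ satisfies $\dim C^\vee=\sum_{i\in J}\dim C_i^\vee$. *)

(* Defs.v *)
From HB Require Import structures.
From mathcomp Require Import all_boot all_order all_algebra.
From mathcomp Require Import reals.
Set Implicit Arguments. Unset Strict Implicit. Unset Printing Implicit Defensive.
Import Order.TTheory GRing.Theory Num.Theory.
Local Open Scope ring_scope.

Section Tropical.
Variables (R : realType) (m : nat).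

Definition expo := 'rV[int]_m.

(* Repeated exponents are harmless:
   only the largest coefficient of a repeated exponent can ever be active. *)
Definition tpoly := seq (expo * R).

Definition tdot (a : expo) (x : 'rV[R]_m) : R :=
  \sum_(j < m) (a 0 j)%:~R * x 0 j.

Definition tterm (p : expo * R) (x : 'rV[R]_m) : R := p.2 + tdot p.1 x.

Definition teval (f : tpoly) (x : 'rV[R]_m) : R :=
  match f with
  | [::] => 0
  | p :: f' => foldr (fun q acc => Num.max (tterm q x) acc) (tterm p x) f'
  end.

(* exponents a with lam_a + a.x = f(x); C^vee = conv (tactive f x) *)
Definition tactive (f : tpoly) (x : 'rV[R]_m) : seq expo :=
  undup [seq p.1 | p <- f & tterm p x == teval f x].

Definition in_Vtr (f : tpoly) (x : 'rV[R]_m) : bool := (1 < size (tactive f x))%N.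

Definition adim (s : seq expo) : nat :=
  \rank (\matrix_(i < size s, j < m)
           ((nth 0 s i 0 j - head 0 s 0 j)%:~R : rat)).

Definition tmul (f g : tpoly) : tpoly :=
  [seq (p.1 + q.1, p.2 + q.2) | p <- f, q <- g].
Definition tprod (fs : seq tpoly) : tpoly := foldr tmul [:: (0, 0)] fs.

(* x is a vertex (0-cell) of V_tr(f): the dual cell conv(tactive f x) of
   the cell containing x in its relative interior has dimension m *)
Definition is_vertex (f : tpoly) (x : 'rV[R]_m) : bool :=
  in_Vtr f x && (adim (tactive f x) == m)%N.

(* Maximal cells of Subdiv(f): the cells are conv(tactive f x), x in R^m *)
Definition max_cell (f : tpoly) (x : 'rV[R]_m) : Prop :=
  forall y, {subset tactive f x <= tactive f y} ->
            {subset tactive f y <= tactive f x}.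

Definition unimodular_simplex (s : seq expo) : Prop :=
  exists (a0 : expo) (b : 'I_m -> expo),
    (forall a, (a \in s) = (a == a0) || [exists i, a == b i]) /\
    `|\det (\matrix_(i < m, j < m) (b i 0 j - a0 0 j))| = 1.

Definition smooth_trop (f : tpoly) : Prop :=
  forall x, max_cell f x -> unimodular_simplex (tactive f x).

Section Family.
Variables (n : nat) (f : 'I_n -> tpoly).

Definition prodJ (J : {set 'I_n}) : tpoly := tprod [seq f i | i <- enum J].

Definition in_IJ (J : {set 'I_n}) (x : 'rV[R]_m) : bool :=
  [forall i in J, in_Vtr (f i) x].

(* dim of C^vee for the cell C of I_J containing x in its relative
   interior (C^vee = sum_i C_i^vee in Subdiv_{U_J}) *)
Definition dual_dim (J : {set 'I_n}) (x : 'rV[R]_m) : nat :=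
  adim (tactive (prodJ J) x).

Definition trop_transversal : Prop :=
  forall J : {set 'I_n}, (2 <= #|J|)%N ->
    (* dim I_J = m - |J|  (cells of I_J have dimension m - dim C^vee) *)
    ((exists x, in_IJ J x /\ (m - dual_dim J x = m - #|J|)%N) /\
     (forall x, in_IJ J x -> (m - dual_dim J x <= m - #|J|)%N)) /\
    (forall x, in_IJ J x ->
       dual_dim J x = (\sum_(i in J) adim (tactive (f i) x))%N).

Definition vert_U (J : {set 'I_n}) (x : 'rV[R]_m) : bool :=
  is_vertex (prodJ J) x.

Definition vert_I (x : 'rV[R]_m) : bool :=
  in_IJ setT x && (dual_dim setT x == m)%N.

End Family.
End Tropical.

(* Main.v *)
Require Import Defs.
From HB Require Import structures.
From mathcomp Require Import all_boot all_order all_algebra.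
From mathcomp Require Import reals zify.
Import Order.TTheory GRing.Theory Num.Theory.
Local Open Scope ring_scope.
Set Implicit Arguments. Unset Strict Implicit.


Section Trop.
Variables (R : realType) (m : nat).
Implicit Types (f g : tpoly R m) (x : 'rV[R]_m).

Lemma fold_props x (v : R) (l : tpoly R m) :
  [/\ v <= foldr (fun q acc => Num.max (tterm q x) acc) v l,
      (forall q, q \in l -> tterm q x <= foldr (fun q acc => Num.max (tterm q x) acc) v l) &
      (foldr (fun q acc => Num.max (tterm q x) acc) v l = v \/
         exists2 q, q \in l & foldr (fun q acc => Num.max (tterm q x) acc) v l = tterm q x)].
Proof.
elim: l => [|q l [IH1 IH2 IH3]] /=; first by split => //; left.
split.
- by rewrite (le_trans IH1) // le_max lexx orbT.
- move=> q'; rewrite inE => /orP [/eqP ->|ql]; first by rewrite le_max lexx.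
  by rewrite le_max IH2 ?orbT.
- case: (leP (tterm q x)) => H.
  + case: IH3 => [->|[q' q'l ->]]; [by left | by right; exists q' => //; rewrite inE q'l orbT].
  + by right; exists q => //; rewrite inE eqxx.
Qed.

Lemma teval_ub f x p : p \in f -> tterm p x <= teval f x.
Proof.
case: f => [//|q l]; rewrite inE /= => /orP [/eqP ->|pl].
  by case: (fold_props x (tterm q x) l).
by case: (fold_props x (tterm q x) l) => _ H _; apply: H.
Qed.

Lemma teval_att f x : f != [::] -> exists2 p, p \in f & tterm p x = teval f x.
Proof.
case: f => [//|q l] _ /=.
case: (fold_props x (tterm q x) l) => _ _ [->|[q' q'l ->]].
  by exists q; rewrite ?inE ?eqxx.
by exists q'; rewrite // inE q'l orbT.
Qed.

Lemma teval_char f x v : f != [::] -> (forall p, p \in f -> tterm p x <= v) ->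
  (exists2 p, p \in f & tterm p x = v) -> teval f x = v.
Proof.
move=> fn ub [p pf hv]; apply/eqP; rewrite eq_le -{2}hv teval_ub // andbT.
by have [q qf <-] := teval_att x fn; apply: ub.
Qed.

Lemma tdotD (a b : expo m) x : tdot (a + b) x = tdot a x + tdot b x.
Proof.
rewrite /tdot -big_split; apply: eq_bigr => j _.
by rewrite mxE intrD mulrDl.
Qed.

Lemma ttermD (p q : expo m * R) x :
  tterm (p.1 + q.1, p.2 + q.2) x = tterm p x + tterm q x.
Proof. by rewrite /tterm /= tdotD addrACA. Qed.

Lemma tmul_nil f g : f != [::] -> g != [::] -> tmul f g != [::].
Proof. by case: f => // p f _; case: g. Qed.

Lemma tmem_mul f g r : reflect (exists p q, [/\ p \in f, q \in g & r = (p.1 + q.1, p.2 + q.2)])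
   (r \in tmul f g).
Proof.
apply: (iffP allpairsP) => [[[p q] /= [pf qg ->]]|[p [q [pf qg ->]]]].
  by exists p, q.
by exists (p, q).
Qed.

Lemma teval_mul f g x : f != [::] -> g != [::] ->
  teval (tmul f g) x = teval f x + teval g x.
Proof.
move=> fn gn; apply: teval_char; first exact: tmul_nil.
  move=> r /tmem_mul [p [q [pf qg ->]]]; rewrite ttermD.
  by apply: lerD; apply: teval_ub.
have [p pf hp] := teval_att x fn; have [q qg hq] := teval_att x gn.
exists (p.1 + q.1, p.2 + q.2); first by apply/tmem_mul; exists p, q.
by rewrite ttermD hp hq.
Qed.

Lemma tmem_active f x a : reflect (exists2 p, p \in f & tterm p x = teval f x /\ a = p.1)
  (a \in tactive f x).
Proof.
rewrite /tactive mem_undup; apply: (iffP mapP) => [[p]|[p pf [h ->]]].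
  by rewrite mem_filter => /andP [/eqP h pf] ->; exists p.
by exists p; rewrite // mem_filter h eqxx.
Qed.

Lemma tactive_mul f g x a : f != [::] -> g != [::] ->
  reflect (exists b c, [/\ b \in tactive f x, c \in tactive g x & a = b + c])
   (a \in tactive (tmul f g) x).
Proof.
move=> fn gn; apply: (iffP (tmem_active _ _ _)).
- move=> [r /tmem_mul [p [q [pf qg ->]]]] [].
  rewrite ttermD teval_mul // => h ->.
  have hp : tterm p x = teval f x.
    apply/eqP; rewrite eq_le teval_ub //=.
    have := lerD (lexx (tterm p x)) (teval_ub x qg).
    by rewrite h lerD2r.
  have hq : tterm q x = teval g x by apply: (addrI (tterm p x)); rewrite h hp.
  exists p.1, q.1; split => //; apply/tmem_active; [exists p|exists q] => //.
- move=> [b [c [/tmem_active [p pf [hp ->]] /tmem_active [q qg [hq ->]] ->]]].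
  exists (p.1 + q.1, p.2 + q.2); first by apply/tmem_mul; exists p, q.
  by rewrite ttermD teval_mul // hp hq.
Qed.




Definition emb (a : expo m) : 'rV[rat]_m := \row_j ((a 0 j)%:~R : rat).
Definition Dm (s : seq (expo m)) : 'M[rat]_(size s, m) :=
  \matrix_(i < size s, j < m) ((nth 0 s i 0 j - head 0 s 0 j)%:~R : rat).

Lemma adimE s : adim s = \rank (Dm s).
Proof. by []. Qed.

Lemma embD a b : emb (a + b) = emb a + emb b.
Proof. by apply/rowP => j; rewrite !mxE intrD. Qed.

Lemma emb_inj : injective emb.
Proof.
move=> a b h; apply/rowP => j; move/rowP: h => /(_ j); rewrite !mxE.
by move/intr_inj.
Qed.

Lemma row_Dm s i : row i (Dm s) = emb (nth 0 s i) - emb (head 0 s).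
Proof. by apply/rowP => j; rewrite !mxE intrB. Qed.

Lemma subB_sub n1 (u v : 'rV[rat]_m) (A : 'M[rat]_(n1, m)) :
  (u <= A)%MS -> (v <= A)%MS -> (u - v <= A)%MS.
Proof. by move=> hu hv; apply: addmx_sub => //; rewrite eqmx_opp. Qed.

Lemma Dm_row s a : a \in s -> (emb a - emb (head 0 s) <= Dm s)%MS.
Proof.
move=> as_; have hi : (index a s < size s)%N by rewrite index_mem.
by rewrite -{1}(nth_index 0 as_) -(@row_Dm s (Ordinal hi)) row_sub.
Qed.

Lemma Dm_mem s a b : a \in s -> b \in s -> (emb a - emb b <= Dm s)%MS.
Proof.
move=> ha hb.
have -> : emb a - emb b = (emb a - emb (head 0 s)) - (emb b - emb (head 0 s)).
  by rewrite opprB addrA subrK.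
by apply: subB_sub; apply: Dm_row.
Qed.

Lemma Dm_sub s a0 n1 (W : 'M[rat]_(n1, m)) : a0 \in s ->
  (forall a, a \in s -> (emb a - emb a0 <= W)%MS) -> (Dm s <= W)%MS.
Proof.
move=> a0s h; apply/row_subP => i; rewrite row_Dm.
have hh : head 0 s \in s by case: s a0s {h i} => //= x l _; rewrite inE eqxx.
have -> : emb (nth 0 s i) - emb (head 0 s) =
  (emb (nth 0 s i) - emb a0) - (emb (head 0 s) - emb a0).
  by rewrite opprB addrA subrK.
by apply: subB_sub; apply: h => //; apply: mem_nth.
Qed.

Lemma Dm_le1 s : (size s <= 1)%N -> Dm s = 0.
Proof.
move=> hs; apply/row_matrixP => i; rewrite row_Dm row0.
have -> : (i : nat) = 0%N by case: i => [[|k]] //= /leq_trans /(_ hs).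
by case: s {i hs} => [|x l] /=; rewrite subrr.
Qed.

Lemma Dm_nz s : uniq s -> (1 < size s)%N -> Dm s != 0.
Proof.
move=> us hs; apply/eqP => h0.
have := congr1 (row (Ordinal hs)) h0; rewrite row_Dm row0 => /eqP.
rewrite subr_eq0 => /eqP /emb_inj.
case: s us hs {h0} => [|x [|y l]] //= /andP [xn _] _ e.
by move: xn; rewrite -e inE eqxx.
Qed.

Lemma rank_Dm_pos s : uniq s -> (1 < size s)%N = (0 < \rank (Dm s))%N.
Proof.
move=> us; rewrite lt0n mxrank_eq0; case: ltnP => h.
  by rewrite Dm_nz.
by rewrite Dm_le1 ?eqxx.
Qed.


Lemma tactive_ex f x : f != [::] -> exists a, a \in tactive f x.
Proof.
by move=> fn; have [p pf hp] := teval_att x fn; exists p.1; apply/tmem_active; exists p.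
Qed.

Lemma Dm_mul f g x : f != [::] -> g != [::] ->
  (Dm (tactive (tmul f g) x) :=: Dm (tactive f x) + Dm (tactive g x))%MS.
Proof.
move=> fn gn.
have [a0 ha0] := tactive_ex x fn; have [b0 hb0] := tactive_ex x gn.
have hc0 : a0 + b0 \in tactive (tmul f g) x.
  by apply/(tactive_mul _ _ fn gn); exists a0, b0.
apply/eqmxP/andP; split.
- apply: (Dm_sub hc0) => c /(tactive_mul _ _ fn gn) [a [b [ha hb ->]]].
  have -> : emb (a + b) - emb (a0 + b0) = (emb a - emb a0) + (emb b - emb b0).
    by rewrite !embD opprD addrACA.
  by apply: addmx_sub_adds; apply: Dm_mem.
- rewrite addsmx_sub; apply/andP; split.
  + apply: (Dm_sub ha0) => a ha.
    have -> : emb a - emb a0 = emb (a + b0) - emb (a0 + b0).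
      by rewrite !embD opprD addrACA subrr addr0.
    by apply: Dm_mem; apply/(tactive_mul _ _ fn gn); [exists a, b0|exists a0, b0].
  + apply: (Dm_sub hb0) => b hb.
    have -> : emb b - emb b0 = emb (a0 + b) - emb (a0 + b0).
      by rewrite !embD opprD addrACA subrr add0r.
    by apply: Dm_mem; apply/(tactive_mul _ _ fn gn); [exists a0, b|exists a0, b0].
Qed.

Lemma tprod_nil fs : all (fun g => g != [::]) fs -> tprod fs != [::].
Proof.
elim: fs => [//|g fs IH] /= /andP [gn /IH hn]; exact: tmul_nil.
Qed.

Lemma Dm_prod fs x : all (fun g => g != [::]) fs ->
  (Dm (tactive (tprod fs) x) :=: \sum_(g <- fs) <<Dm (tactive g x)>>)%MS.
Proof.
elim: fs => [|g fs IH].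
  move=> _; rewrite big_nil /= Dm_le1; first by apply/eqmxP; rewrite !sub0mx.
  by rewrite /tactive /=; case: ifP.
move=> /andP [gn hfs]; rewrite big_cons.
apply: eqmx_trans (Dm_mul _ gn (tprod_nil hfs)) _.
exact: adds_eqmx (eqmx_sym (genmxE _)) (IH hfs).
Qed.

Lemma Dm_prodJ n (f : 'I_n -> tpoly R m) (J : {set 'I_n}) x :
  (forall i, f i != [::]) ->
  (Dm (tactive (prodJ f J) x) :=: \sum_(i in J) <<Dm (tactive (f i) x)>>)%MS.
Proof.
move=> hne; rewrite /prodJ.
have ha : all (fun g => g != [::]) [seq f i | i <- enum J].
  by apply/allP => g /mapP [i _ ->].
apply: eqmx_trans (Dm_prod x ha) _.
by rewrite big_map big_enum.
Qed.

End Trop.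

Section Comb.
Variables (n : nat) (S : {set 'I_n}).
Hypotheses (hn : (1 <= n)%N) (hS : S != set0).

Lemma comb_id :
  ((S == setT) +
   #|[set J : {set 'I_n} | [&& 1 <= #|J| <= n.-1, odd #|J| == odd n.-1
                              & S \subset J]]| =
   1 + #|[set J : {set 'I_n} | [&& 1 <= #|J| <= n.-2, odd #|J| == odd n
                              & S \subset J]]|)%N.
Proof.
have hon : odd n.-1 = ~~ odd n by case: (n) hn => // k _; rewrite /= negbK.
have cardJ (J : {set 'I_n}) : (#|J| <= n)%N by rewrite -[X in (_ <= X)%N]card_ord max_card.
have pos (J : {set 'I_n}) : S \subset J -> (1 <= #|J|)%N.
  move=> sJ; case/set0Pn: hS => y yS; rewrite card_gt0; apply/set0Pn; exists y.
  exact: (subsetP sJ).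
case: eqP => [->|/eqP nT].
  have hT (J : {set 'I_n}) : (setT \subset J) -> #|J| = n.
    by rewrite subTset => /eqP ->; rewrite cardsT card_ord.
  have h1 : ~~ (n <= n.-1)%N by lia.
  have h2 : ~~ (n <= n.-2)%N by lia.
  rewrite (_ : [set J : {set 'I_n} | _ ] = set0); last first.
    apply/setP => J; rewrite !inE; case sJ: (setT \subset J); last by rewrite !andbF.
    by rewrite hT // (negbTE h1) andbF.
  rewrite (_ : [set J : {set 'I_n} | _ ] = set0) ?cards0 //.
  apply/setP => J; rewrite !inE; case sJ: (setT \subset J); last by rewrite !andbF.
  by rewrite hT // (negbTE h2) andbF.
have [x _ xS] : exists2 x, x \in setT & x \notin S by apply/subsetPn; rewrite subTset.
pose t (J : {set 'I_n}) := if x \in J then J :\ x else x |: J.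
have tK : involutive t.
  move=> J; rewrite /t; case hx: (x \in J).
    by rewrite !inE eqxx /= setD1K.
  by rewrite !inE eqxx /= setU1K ?hx.
have memt J i : i != x -> (i \in t J) = (i \in J).
  by move=> ix; rewrite /t; case: ifP => _; rewrite !inE (negbTE ix).
have subt J : (S \subset t J) = (S \subset J).
  apply/subsetP/subsetP => h i iS; have ix : i != x by apply: contraNneq xS => <-.
    by rewrite -(memt J i ix) h.
  by rewrite (memt J i ix) h.
have oddt J : odd #|t J| = ~~ odd #|J|.
  rewrite /t; case: ifP => hx.
    by rewrite [in RHS](cardsD1 x J) hx add1n /= negbK.
  by rewrite cardsU1 hx add1n.
clearbody t.
set A := [set J : {set 'I_n} | _ ]; set B := [set J : {set 'I_n} | _ ].
have eA : A = [set J : {set 'I_n} | (odd #|J| != odd n) && (S \subset J)].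
  apply/setP => J; rewrite !inE hon.
  case sJ: (S \subset J); rewrite ?andbF // andbT pos //=.
  have le := cardJ J; rewrite andbT.
  case: (ltngtP #|J| n) => [lt|gt|->].
  - have -> : (#|J| <= n.-1)%N by lia.
    by case: (odd #|J|); case: (odd n).
  - by move: le; rewrite leqNgt gt.
  - have -> : (n <= n.-1)%N = false by lia.
    by rewrite eqxx.
have eE : t @^-1: A = setT |: B.
  apply/setP => J; rewrite eA !inE oddt subt.
  case: (boolP (J == setT)) => [/eqP ->|nJ].
    by rewrite cardsT card_ord subsetT; case: (odd n).
  have nn : #|J| != n.
    by apply: contra nJ => /eqP e; rewrite eqEcard subsetT cardsT card_ord e leqnn.
  have [sJ|nsJ] := boolP (S \subset J); last by rewrite !andbF.
  rewrite pos // !andbT /=.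
  have le := cardJ J.
  case: (#|J| =P n.-1) => [->|ne].
    by rewrite hon; case: (odd n); rewrite /= ?andbF.
  have -> : (#|J| <= n.-2)%N by lia.
  by case: (odd #|J|); case: (odd n).
change (nat_of_bool false + #|A|)%N with #|A|.
rewrite -(card_imset (mem A) (can_inj tK)) (can2_imset_pre (mem A) tK tK) eE cardsU1.
suff -> : setT \notin B by [].
rewrite !inE cardsT card_ord; apply/negP => /and3P [/andP [_ h] _ _]; lia.
Qed.
End Comb.

Section Main.
Variables (R : realType) (m n : nat) (f : 'I_n -> tpoly R m) (p : 'rV[R]_m).
Hypotheses (hn : (2 <= n)%N) (hnm : (n <= m)%N) (hne : forall i, f i != [::])
  (htr : trop_transversal f).

Let V i := <<Dm (tactive (f i) p)>>%MS.
Let d i := adim (tactive (f i) p).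
Let W (J : {set 'I_n}) := (\sum_(i in J) V i)%MS.
Let r J := \rank (W J).
Let S := [set i | in_Vtr (f i) p].

Lemma rU (J : {set 'I_n}) : adim (tactive (prodJ f J) p) = r J.
Proof. by rewrite adimE; apply: eqmx_rank; apply/eqmxP; apply: Dm_prodJ. Qed.

Lemma rV i : \rank (V i) = d i.
Proof. by rewrite mxrank_gen. Qed.

Lemma inS i : (i \in S) = (0 < d i)%N.
Proof. by rewrite inE /in_Vtr rank_Dm_pos ?undup_uniq. Qed.

Lemma V0 i : i \notin S -> V i = 0.
Proof.
rewrite inS -eqn0Ngt /d adimE mxrank_eq0 => /eqP h.
by rewrite /V h genmx0.
Qed.

Lemma WS (J : {set 'I_n}) : W J = W (J :&: S).
Proof.
rewrite /W (bigID (mem S)) /= [X in (_ + X)%MS]big1; last by move=> i /andP [_ /V0].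
by rewrite addsmx0_id; apply: eq_bigl => i; rewrite in_setI.
Qed.

Lemma rC (K : {set 'I_n}) : K \subset S -> r K = (\sum_(i in K) d i)%N.
Proof.
move=> KS.
have [h2|] := leqP 2 #|K|.
  have [_ hd] := htr h2.
  have hK : in_IJ f K p by apply/forall_inP => i iK; have := subsetP KS i iK; rewrite inE.
  by rewrite -rU; apply: hd.
rewrite ltnS leq_eqVlt ltnS leqn0 => /orP [/cards1P [j ->]|/eqP /cards0_eq ->].
  by rewrite /r /W !big_set1 rV.
by rewrite /r /W !big_set0 mxrank0.
Qed.

Lemma vU (J : {set 'I_n}) : vert_U f J p = (r J == m).
Proof.
have h := rU J; change (\rank (Dm (tactive (prodJ f J) p)) = r J) in h.
rewrite /vert_U /is_vertex /in_Vtr rank_Dm_pos ?undup_uniq // rU h.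
by case: eqP => [->|_]; rewrite ?andbF ?andbT //; lia.
Qed.

Lemma vI : vert_I f p = (S == setT) && (r setT == m).
Proof.
rewrite /vert_I /dual_dim rU; congr (_ && _).
apply/forall_inP/eqP => [h|hS].
  by apply/setP => i; rewrite !inE h.
move=> i _; have : i \in S by rewrite hS inE.
by rewrite /S inE.
Qed.

Lemma rJS (J : {set 'I_n}) : S \subset J -> r J = r setT.
Proof. by move=> sJ; rewrite /r WS (setIidPr sJ) [W setT]WS setTI. Qed.

Lemma vU2 (J : {set 'I_n}) : vert_U f J p = (S \subset J) && (r setT == m).
Proof.
rewrite vU; case sJ: (S \subset J); first by rewrite rJS.
apply/negbTE/negP => /eqP hr; move/negbT: sJ => /subsetPn [i iS iJ].
pose K := i |: (J :&: S).
have iK : i \notin J :&: S by rewrite inE (negbTE iJ).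
have KS : K \subset S by apply/subsetP => j; rewrite in_setU1 in_setI => /orP [/eqP -> //|/andP [] //].
have := rank_leq_col (W K); rewrite -/(r K) rC // big_setU1 //= -rC ?subsetIr //.
rewrite /r -WS -/(r J) hr.
by move: iS; rewrite inS; case: (d i) => // k _; rewrite addSn ltnNge leq_addl.
Qed.

Lemma S0 : r setT == m -> S != set0.
Proof.
move=> /eqP h; apply/negP => /eqP e.
move: h; rewrite /r WS e setI0 /W big_set0 mxrank0 => h0.
lia.
Qed.

Lemma main_p :
    (vert_I f p +
     #|[set J : {set 'I_n} | [&& 1 <= #|J| <= n.-1, odd #|J| == odd n.-1
                              & vert_U f J p]]|)%N =
    (vert_U f setT p +
     #|[set J : {set 'I_n} | [&& 1 <= #|J| <= n.-2, odd #|J| == odd n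
                              & vert_U f J p]]|)%N.
Proof.
rewrite vI vU2 subsetT.
case hb: (r setT == m).
  rewrite !andbT.
  have eL : [set J : {set 'I_n} | [&& (1 <= #|J| <= n.-1)%N, odd #|J| == odd n.-1
                              & vert_U f J p]] =
            [set J : {set 'I_n} | [&& (1 <= #|J| <= n.-1)%N, odd #|J| == odd n.-1
                              & S \subset J]].
    by apply/setP => J; rewrite !inE vU2 hb andbT.
  have eR : [set J : {set 'I_n} | [&& (1 <= #|J| <= n.-2)%N, odd #|J| == odd n
                              & vert_U f J p]] =
            [set J : {set 'I_n} | [&& (1 <= #|J| <= n.-2)%N, odd #|J| == odd n
                              & S \subset J]].
    by apply/setP => J; rewrite !inE vU2 hb andbT.
  rewrite eL eR; apply: comb_id; [exact: ltnW | exact: S0].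
rewrite !andbF.
rewrite (_ : [set J : {set 'I_n} | _ ] = set0); last first.
  by apply/setP => J; rewrite !inE vU2 hb !andbF.
rewrite (_ : [set J : {set 'I_n} | _ ] = set0) //.
by apply/setP => J; rewrite !inE vU2 hb !andbF.
Qed.
End Main.

Unset Implicit Arguments.

Theorem lemma3p4 (R : realType) (m n : nat) (f : 'I_n -> tpoly R m)
  (hn : (2 <= n)%N) (hnm : (n <= m)%N)
  (hne : forall i, f i != [::])
  (hsmooth : forall i, smooth_trop (f i))
  (htr : trop_transversal f) :
  forall p : 'rV[R]_m,
    (vert_I f p +
     #|[set J : {set 'I_n} | [&& 1 <= #|J| <= n.-1, odd #|J| == odd n.-1
                              & vert_U f J p]]|)%N =
    (vert_U f setT p +
     #|[set J : {set 'I_n} | [&& 1 <= #|J| <= n.-2, odd #|J| == odd n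
                              & vert_U f J p]]|)%N.
Proof. by move=> p; apply: main_p. Qed.
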